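(* Let $V\subseteq\{0,1\}^n$ be nonempty and let $\preceq$ be the lexicographic term order with $x_1\succ x_2\succ\cdots\succ x_n$. Then \[ \mathcal{S}_{\mathsf{lex}}(V)=\mathcal{S}_{\mathsf{lex}}(V^0)\cup\mathcal{S}_{\mathsf{lex}}(V^1)\cup\big(n\ast(\mathcal{S}_{\mathsf{lex}}(V^0)\cap\mathcal{S}_{\mathsf{lex}}(V^1))\big). \]
   Context: For $a\in\{0,1\}$, $V^a=\{v\in\{0,1\}^{n-1}:(v,a)\in V\}$. For $W\subseteq\{0,1\}^k$, $\mathcal{S}_{\mathsf{lex}}(W)=\{\tau\subseteq[k]:\prod_{i\in\tau}x_i\notin\mathrm{in}(I(W))\}$, where $I(W)\subseteq\mathbb{R}[x_1,\dots,x_k]$ is the vanishing ideal and the initial ideal is with respect to lexicographic order $x_1\succ\cdots\succ x_k$ (so $\mathcal{S}_{\mathsf{lex}}(\emptyset)=\emptyset$). For a collection $K$ of subsets of $[n-1]$, $n\ast K=K\cup\{\sigma\cup\{n\}:\sigma\in K\}$. *)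

(* Defs.v *)
From HB Require Import structures.
From mathcomp Require Import all_boot all_order all_algebra.
From mathcomp Require Import reals.
From mathcomp Require Import mpoly.

Set Implicit Arguments.
Unset Strict Implicit.
Unset Printing Implicit Defensive.

Import GRing.Theory.
Local Open Scope ring_scope.

Section Defs.
Variable R : realType.

(* Points of {0,1}^k: boolean vectors indexed by 'I_k (index i stands for x_{i+1}). *)
Definition pt k (v : {ffun 'I_k -> bool}) : 'I_k -> R := fun i => (v i)%:R.

Definition vanishing k (W : {set {ffun 'I_k -> bool}}) (p : {mpoly R[k]}) : Prop :=
  forall w, w \in W -> p.@[pt w] = 0.

Definition lex_lt k (m1 m2 : 'X_{1..k}) : Prop :=
  exists i : 'I_k, (forall j : 'I_k, (j < i)%N -> m1 j = m2 j) /\ (m1 i < m2 i)%N.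

Definition is_lex_lead k (f : {mpoly R[k]}) (m : 'X_{1..k}) : Prop :=
  f != 0 /\ m \in msupp f /\ (forall m', m' \in msupp f -> m' <> m -> lex_lt m' m).

Definition ideal_gen k (G : {mpoly R[k]} -> Prop) (g : {mpoly R[k]}) : Prop :=
  exists s : seq ({mpoly R[k]} * {mpoly R[k]}),
    (forall x, x \in s -> G x.2) /\ g = \sum_(x <- s) x.1 * x.2.

Definition initial_lex k (I : {mpoly R[k]} -> Prop) : {mpoly R[k]} -> Prop :=
  ideal_gen (fun g => exists f m, I f /\ is_lex_lead f m /\ g = 'X_[m]).

Definition sqfree_mon k (tau : {set 'I_k}) : 'X_{1..k} :=
  [multinom (nat_of_bool (i \in tau)) | i < k].

Definition Slex k (W : {set {ffun 'I_k -> bool}}) : {set {set 'I_k}} :=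
  [set tau | ~~ boolp.asbool (initial_lex (vanishing W) 'X_[sqfree_mon tau])].

End Defs.

Definition ext m (v : {ffun 'I_m -> bool}) (a : bool) : {ffun 'I_m.+1 -> bool} :=
  [ffun i => match unlift ord_max i with Some j => v j | None => a end].

Definition slice m (V : {set {ffun 'I_m.+1 -> bool}}) (a : bool) : {set {ffun 'I_m -> bool}} :=
  [set v | ext v a \in V].

Definition embed m (s : {set 'I_m}) : {set 'I_m.+1} := [set lift ord_max i | i in s].

Definition embedK m (K : {set {set 'I_m}}) : {set {set 'I_m.+1}} := [set embed s | s in K].

(* n * K = K  u  { sigma u {n} : sigma in K }, with n = m+1 (index ord_max). *)
Definition coneK m (K : {set {set 'I_m}}) : {set {set 'I_m.+1}} :=
  embedK K :|: [set ord_max |: embed s | s in K].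

(* Main.v *)
Require Import Defs.
From HB Require Import structures.
From mathcomp Require Import all_boot all_order all_algebra.
From mathcomp Require Import reals.
From mathcomp Require Import mpoly.
Import GRing.Theory.

Set Implicit Arguments.
Unset Strict Implicit.
Unset Printing Implicit Defensive.

Definition rst m (mu : 'X_{1..m.+1}) : 'X_{1..m} := [multinom mu (lift ord_max i) | i < m].
Definition jn m (nu : 'X_{1..m}) (j : nat) : 'X_{1..m.+1} :=
  [multinom (if unlift ord_max i is Some i' then nu i' else j) | i < m.+1].

Lemma rst_jn m (nu : 'X_{1..m}) j : rst (jn nu j) = nu.
Proof. by apply/mnmP=> i; rewrite !mnmE liftK. Qed.

Lemma jn_max m (nu : 'X_{1..m}) j : jn nu j ord_max = j.
Proof. by rewrite mnmE unlift_none. Qed.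

Lemma jn_rst m (mu : 'X_{1..m.+1}) : jn (rst mu) (mu ord_max) = mu.
Proof.
apply/mnmP=> i; rewrite mnmE; case: unliftP => [j ->|->] //.
by rewrite mnmE.
Qed.

Lemma jn_eq m (nu : 'X_{1..m}) j mu : (jn nu j == mu) = (nu == rst mu) && (j == mu ord_max).
Proof.
apply/eqP/andP => [<-|[/eqP -> /eqP ->]]; last exact: jn_rst.
by rewrite rst_jn jn_max.
Qed.

Lemma lex_irr k (mu : 'X_{1..k}) : ~ lex_lt mu mu.
Proof. by case=> i [_]; rewrite ltnn. Qed.

Lemma lex_trans k (a b c : 'X_{1..k}) : lex_lt a b -> lex_lt b c -> lex_lt a c.
Proof.
move=> [i [Hi Hai]] [j [Hj Hbj]].
case: (ltngtP i j) => Hij.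
- exists i; split; first by move=> l Hl; rewrite Hi // Hj // (ltn_trans Hl Hij).
  by rewrite -(Hj _ Hij).
- exists j; split; first by move=> l Hl; rewrite Hi ?Hj // (ltn_trans Hl Hij).
  by rewrite (Hi _ Hij).
- have eij : i = j by apply: val_inj.
  subst j; exists i; split; first by move=> l Hl; rewrite Hi ?Hj.
  exact: ltn_trans Hai Hbj.
Qed.

Lemma lift_lt m (i : 'I_m) (l : 'I_m.+1) : (l < lift ord_max i)%N ->
  exists l', l = lift ord_max l' /\ (l' < i)%N.
Proof.
rewrite lift_max => Hl; have Hlm : (l < m)%N by apply: (ltn_trans Hl).
exists (Ordinal Hlm); split; first by apply: val_inj; rewrite /= /bump leqNgt Hlm.
by [].
Qed.

Lemma lex_rst m (a b : 'X_{1..m.+1}) :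
  lex_lt a b <-> lex_lt (rst a) (rst b) \/ (rst a = rst b /\ (a ord_max < b ord_max)%N).
Proof.
split.
- move=> [i [Hi Hab]]; case: (unliftP ord_max i) => [i' Ei|Ei]; subst i.
  + left; exists i'; split; last by rewrite !mnmE.
    move=> j Hj; rewrite !mnmE; apply: Hi.
    by rewrite !lift_max.
  + right; split=> //; apply/mnmP=> j; rewrite !mnmE; apply: Hi.
    by rewrite lift_max.
- case=> [[i [Hi Hab]]|[Eab Hlt]].
  + exists (lift ord_max i); split; last by move: Hab; rewrite !mnmE.
    move=> l /lift_lt [l' [-> Hl']].
    by have := Hi _ Hl'; rewrite !mnmE.
  + exists ord_max; split=> // l Hl.
    have Hlm : (l < m)%N by [].
    have -> : l = lift ord_max (Ordinal Hlm) by apply: val_inj; rewrite /= /bump leqNgt Hlm.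
    by have := congr1 (fun x : 'X_{1..m} => x (Ordinal Hlm)) Eab; rewrite !mnmE.
Qed.

Lemma lex_shift k (d a b : 'X_{1..k}) : lex_lt a b -> lex_lt (d + a)%MM (d + b)%MM.
Proof.
move=> [i [Hi Hab]]; exists i; split.
- by move=> j Hj; rewrite !mnmDE Hi.
- by rewrite !mnmDE ltn_add2l.
Qed.
Local Open Scope ring_scope.

Definition lead (R : realType) k (f : {mpoly R[k]}) (mu : 'X_{1..k}) :=
  f@_mu != 0 /\ forall nu, f@_nu != 0 -> nu <> mu -> lex_lt nu mu.
Definition LL (R : realType) k (W : {set {ffun 'I_k -> bool}}) (mu : 'X_{1..k}) :=
  exists f : {mpoly R[k]}, vanishing W f /\ lead f mu.

Lemma lead_iff (R : realType) k (f : {mpoly R[k]}) mu : is_lex_lead f mu <-> lead f mu.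
Proof.
split.
- move=> [_ [Hm Hl]]; split; first by rewrite -mcoeff_msupp.
  by move=> nu Hnu; apply: Hl; rewrite mcoeff_msupp.
- move=> [Hm Hl]; split.
  + by apply: contraNneq Hm => ->; rewrite mcoeff0.
  + split; first by rewrite mcoeff_msupp.
    by move=> nu; rewrite mcoeff_msupp; apply: Hl.
Qed.

Lemma sum_nz (R : realType) (I : eqType) (s : seq I) (F : I -> R) :
  \sum_(x <- s) F x != 0 -> exists2 x, x \in s & F x != 0.
Proof.
move=> H; apply/hasP; apply/negPn/negP => /hasPn H0.
move: H; rewrite big1_seq ?eqxx // => i /andP [_ Hi].
by have := H0 _ Hi; rewrite negbK => /eqP.
Qed.

Lemma key (R : realType) k (W : {set {ffun 'I_k -> bool}}) (mu : 'X_{1..k}) :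
  initial_lex (@vanishing R k W) 'X_[mu] <-> LL R W mu.
Proof.
split.
- move=> [s [Hs E]].
  have : ('X_[mu] : {mpoly R[k]})@_mu != 0 by rewrite mcoeffX eqxx oner_neq0.
  rewrite E raddf_sum /= => /sum_nz [x xs Hx].
  have [f [m' [Vf [Lf Ex]]]] := Hs x xs.
  move: Hx; rewrite Ex => Hx.
  have : mu \in msupp (x.1 * 'X_[m']) by rewrite mcoeff_msupp.
  rewrite (perm_mem (msuppMX _ _)) => /mapP [m'' _ Emu].
  exists (f * 'X_[m'']); split.
  + by move=> w Hw; rewrite mevalM Vf // mul0r.
  + move/lead_iff: Lf => [Lf1 Lf2].
    rewrite Emu addmC; split; first by rewrite mcoeffMX.
    move=> nu Hnu; have := Hnu; rewrite -mcoeff_msupp (perm_mem (msuppMX _ _)).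
    move=> /mapP [k' _ Enu]; subst nu; move: Hnu.
    rewrite mcoeffMX => Hk Hne; apply: lex_shift; apply: Lf2 => // Ek.
    by apply: Hne; rewrite Ek.
- move=> [f [Vf Lf]]; exists [:: (1, 'X_[mu])]; split.
  + move=> x; rewrite mem_seq1 => /eqP -> /=; exists f, mu; split=> //; split=> //.
    exact/lead_iff.
  + by rewrite big_seq1 mul1r.
Qed.

Definition up (R : realType) m (j : nat) (g : {mpoly R[m]}) : {mpoly R[m.+1]} :=
  \sum_(nu <- msupp g) g@_nu *: 'X_[jn nu j].
Definition rs (R : realType) m (a : bool) (f : {mpoly R[m.+1]}) : {mpoly R[m]} :=
  \sum_(mu <- msupp f) (f@_mu * (a%:R ^+ mu ord_max)) *: 'X_[rst mu].

Lemma coef_expand (R : realType) k (g : {mpoly R[k]}) rho :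
  g@_rho = \sum_(nu <- msupp g) g@_nu * (nu == rho)%:R.
Proof.
by rewrite {1}(mpolyE g) raddf_sum /=; apply: eq_bigr => nu _; rewrite mcoeffZ mcoeffX.
Qed.

Lemma mcoeff_up (R : realType) m j (g : {mpoly R[m]}) mu :
  (up j g)@_mu = if mu ord_max == j then g@_(rst mu) else 0.
Proof.
rewrite /up raddf_sum /=; under eq_bigr do rewrite mcoeffZ mcoeffX jn_eq.
case: eqP => [<-|Hne].
- by rewrite eqxx coef_expand; apply: eq_bigr => nu _; rewrite andbT.
- have -> : (mu ord_max == j) = false by apply/eqP => E; apply: Hne.
  by rewrite big1 // => nu _; rewrite andbF mulr0.
Qed.

Lemma mcoeff_rs (R : realType) m a (f : {mpoly R[m.+1]}) nu :
  (rs a f)@_nu = \sum_(mu <- msupp f) f@_mu * (a%:R ^+ mu ord_max) * (rst mu == nu)%:R.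
Proof. by rewrite /rs raddf_sum /=; apply: eq_bigr => mu _; rewrite mcoeffZ mcoeffX. Qed.

Lemma mcoeff_rs0 (R : realType) m (f : {mpoly R[m.+1]}) nu :
  (rs false f)@_nu = f@_(jn nu 0).
Proof.
rewrite mcoeff_rs coef_expand; apply: eq_bigr => mu _.
rewrite expr0n -mulrA -natrM mulnb (eq_sym mu) jn_eq andbC.
by rewrite (eq_sym nu) (eq_sym 0%N).
Qed.

Lemma rs_nz (R : realType) m a (f : {mpoly R[m.+1]}) nu :
  (rs a f)@_nu != 0 -> exists mu, f@_mu != 0 /\ rst mu = nu.
Proof.
rewrite mcoeff_rs => /sum_nz [mu Hmu Hne]; exists mu; split; first by rewrite -mcoeff_msupp.
move: Hne; have [//|N] := eqVneq (rst mu) nu; by rewrite mulr0n mulr0 eqxx.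
Qed.

Lemma rs1_coef (R : realType) m (f : {mpoly R[m.+1]}) L l :
  rst l = L -> (forall mu, f@_mu != 0 -> rst mu = L -> mu = l) -> (rs true f)@_L = f@_l.
Proof.
move=> El H; rewrite mcoeff_rs coef_expand; apply: eq_big_seq => mu Hmu.
rewrite expr1n mulr1; case: (eqVneq (rst mu) L) => [E|N].
- by rewrite (H mu _ E) ?eqxx // -mcoeff_msupp.
- by case: eqP => [Em|//]; move: N; rewrite Em El eqxx.
Qed.

Lemma pt_split (R : realType) m (v : {ffun 'I_m -> bool}) (a : bool) (mu : 'X_{1..m.+1}) :
  \prod_(i < m.+1) (pt R (ext v a) i) ^+ (mu i) =
  (\prod_(i < m) (pt R v i) ^+ (rst mu i)) * (a%:R ^+ mu ord_max).
Proof.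
rewrite big_ord_recr /=; congr (_ * _).
- apply: eq_bigr => i _.
  have -> : widen_ord (leqnSn m) i = lift ord_max i.
    by apply: val_inj; rewrite /= /bump leqNgt ltn_ord.
  by rewrite /pt ffunE liftK mnmE.
- by rewrite /pt ffunE unlift_none.
Qed.

Lemma meval_up (R : realType) m j (g : {mpoly R[m]}) v a :
  (up j g).@[pt R (ext v a)] = (a%:R) ^+ j * g.@[pt R v].
Proof.
rewrite /up raddf_sum /= (mevalE _ g) mulr_sumr; apply: eq_bigr => nu _.
rewrite mevalZ mevalX pt_split rst_jn jn_max.
by rewrite (mulrC _ (a%:R ^+ j)) mulrCA.
Qed.

Lemma meval_rs (R : realType) m a (f : {mpoly R[m.+1]}) v :
  (rs a f).@[pt R v] = f.@[pt R (ext v a)].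
Proof.
rewrite /rs raddf_sum /= (mevalE _ f); apply: eq_bigr => mu _.
by rewrite mevalZ mevalX pt_split -mulrA (mulrC (a%:R ^+ _)).
Qed.

Definition restr m (w : {ffun 'I_m.+1 -> bool}) : {ffun 'I_m -> bool} :=
  [ffun i => w (lift ord_max i)].

Lemma ext_restr m (w : {ffun 'I_m.+1 -> bool}) : ext (restr w) (w ord_max) = w.
Proof.
apply/ffunP => i; rewrite !ffunE; case: unliftP => [j ->|->] //.
by rewrite ffunE.
Qed.

Lemma van_ext (R : realType) m (V : {set {ffun 'I_m.+1 -> bool}}) (f : {mpoly R[m.+1]}) :
  (forall a v, v \in slice V a -> f.@[pt R (ext v a)] = 0) -> vanishing V f.
Proof.
by move=> H w Hw; rewrite -(ext_restr w); apply: H; rewrite inE ext_restr.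
Qed.

Lemma van_slice (R : realType) m (V : {set {ffun 'I_m.+1 -> bool}}) (f : {mpoly R[m.+1]}) a :
  vanishing V f -> vanishing (slice V a) (rs a f).
Proof. by move=> Vf v; rewrite inE => Hv; rewrite meval_rs Vf. Qed.

Lemma normalize (R : realType) k (W : {set {ffun 'I_k -> bool}}) nu :
  LL R W nu -> exists g : {mpoly R[k]}, vanishing W g /\ lead g nu /\ g@_nu = 1.
Proof.
move=> [g [Vg [L1 L2]]]; exists ((g@_nu)^-1 *: g); split; last split.
- by move=> w Hw; rewrite mevalZ Vg // mulr0.
- split; first by rewrite mcoeffZ mulf_neq0 // invr_eq0.
  by move=> mu; rewrite mcoeffZ mulf_eq0 negb_or => /andP [_ H]; apply: L2.
- by rewrite mcoeffZ mulVf.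
Qed.

Lemma lex_up (R : realType) m (g : {mpoly R[m]}) L j (mu : 'X_{1..m.+1}) :
  lead g L -> g@_(rst mu) != 0 -> (rst mu <> L \/ (mu ord_max < j)%N) -> lex_lt mu (jn L j).
Proof.
move=> [_ Lg] Hg H; apply/lex_rst; rewrite rst_jn jn_max.
have [E|N] := eqVneq (rst mu) L.
- by right; split=> //; case: H.
- by left; apply: Lg => // E; move: N; rewrite E eqxx.
Qed.

Lemma lead_rs (R : realType) m (f : {mpoly R[m.+1]}) l (g : {mpoly R[m]}) :
  lead f l -> g@_(rst l) != 0 ->
  (forall nu, g@_nu != 0 -> exists mu, f@_mu != 0 /\ rst mu = nu) -> lead g (rst l).
Proof.
move=> [_ Lf] Hg H; split=> // nu /H [mu [Hmu <-]] Hne.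
have Nl : mu <> l by move=> E; apply: Hne; rewrite E.
by case/lex_rst: (Lf _ Hmu Nl) => // [[E _]].
Qed.

Lemma A_back (R : realType) m (V : {set {ffun 'I_m.+1 -> bool}}) L :
  LL R (slice V false) L -> LL R (slice V true) L -> LL R V (jn L 0).
Proof.
move=> /normalize [g0 [V0 [L0 C0]]] /normalize [g1 [V1 [L1 C1]]].
exists (up 0 g0 + up 1 (g1 - g0)); split.
- apply: van_ext => a v Hv; rewrite mevalD !meval_up mevalB expr0 mul1r expr1.
  case: a Hv => Hv /=.
  + by rewrite mulr1n V1 // mul1r sub0r subrr.
  + by rewrite mulr0n mul0r addr0 V0.
- split.
  + by rewrite mcoeffD !mcoeff_up jn_max /= rst_jn C0 addr0 oner_neq0.
  + move=> mu; rewrite mcoeffD !mcoeff_up => Hc Hne.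
    case: (eqVneq (mu ord_max) 0%N) Hc => [E0|N0].
    * rewrite E0 /= addr0 => Hc; apply: (lex_up L0 Hc); left => E.
      by apply: Hne; rewrite -E -E0 jn_rst.
    * case: (eqVneq (mu ord_max) 1%N) => [E1|N1]; last by rewrite add0r eqxx.
      rewrite add0r mcoeffB => Hc.
      have NL : rst mu <> L by move=> E; move: Hc; rewrite E C0 C1 subrr eqxx.
      case: (eqVneq (g0@_(rst mu)) 0) Hc => [->|H0] Hc.
      - by rewrite subr0 in Hc; apply: (lex_up L1 Hc); left.
      - by apply: (lex_up L0 H0); left.
Qed.

Lemma A_fwd (R : realType) m (V : {set {ffun 'I_m.+1 -> bool}}) L :
  LL R V (jn L 0) -> LL R (slice V false) L /\ LL R (slice V true) L.
Proof.
move=> [f [Vf Lf]]; have [Lf1 Lf2] := Lf; split.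
- exists (rs false f); split; first exact: van_slice.
  have := lead_rs Lf; rewrite rst_jn; apply; first by rewrite mcoeff_rs0.
  exact: rs_nz.
- exists (rs true f); split; first exact: van_slice.
  have Hc : (rs true f)@_L = f@_(jn L 0).
    apply: rs1_coef; first exact: rst_jn.
    move=> mu Hmu E; have [//|/eqP N] := eqVneq mu (jn L 0).
    case/lex_rst: (Lf2 _ Hmu N); rewrite rst_jn E; first by move/lex_irr.
    by rewrite jn_max => [[_]].
  have := lead_rs Lf; rewrite rst_jn; apply; first by rewrite Hc.
  exact: rs_nz.
Qed.

Lemma B_back (R : realType) m (V : {set {ffun 'I_m.+1 -> bool}}) L :
  LL R (slice V false) L \/ LL R (slice V true) L -> LL R V (jn L 1).
Proof.
case=> [[g [Vg Lg]]|[g [Vg Lg]]]; have [Lg1 Lg2] := Lg.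
- exists (up 0 g - up 1 g); split.
  + apply: van_ext => a v Hv; rewrite mevalB !meval_up expr0 mul1r expr1.
    case: a Hv => Hv /=; first by rewrite mulr1n mul1r subrr.
    by rewrite mulr0n mul0r subr0 Vg.
  + split.
    * by rewrite mcoeffB !mcoeff_up jn_max /= rst_jn sub0r oppr_eq0.
    * move=> mu; rewrite mcoeffB !mcoeff_up => Hc Hne.
      case: (eqVneq (mu ord_max) 0%N) Hc => [E0|N0].
      - rewrite E0 /= subr0 => Hc; apply: (lex_up Lg Hc); right; by rewrite E0.
      - case: (eqVneq (mu ord_max) 1%N) => [E1|N1]; last by rewrite subrr eqxx.
        rewrite sub0r oppr_eq0 => Hc; apply: (lex_up Lg Hc); left => E.
        by apply: Hne; rewrite -E -E1 jn_rst.
- exists (up 1 g); split.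
  + apply: van_ext => a v Hv; rewrite meval_up expr1.
    case: a Hv => Hv /=; first by rewrite Vg // mulr0.
    by rewrite mulr0n mul0r.
  + split.
    * by rewrite mcoeff_up jn_max /= rst_jn.
    * move=> mu; rewrite mcoeff_up => Hc Hne.
      case: (eqVneq (mu ord_max) 1%N) Hc => [E1|N1]; last by rewrite eqxx.
      move=> Hc; apply: (lex_up Lg Hc); left => E.
      by apply: Hne; rewrite -E -E1 jn_rst.
Qed.

Lemma B_fwd (R : realType) m (V : {set {ffun 'I_m.+1 -> bool}}) L :
  LL R V (jn L 1) -> LL R (slice V false) L \/ LL R (slice V true) L.
Proof.
move=> [f [Vf Lf]]; have [Lf1 Lf2] := Lf.
case: (eqVneq (f@_(jn L 0)) 0) => [Z|NZ].
- right; exists (rs true f); split; first exact: van_slice.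
  have Hc : (rs true f)@_L = f@_(jn L 1).
    apply: rs1_coef; first exact: rst_jn.
    move=> mu Hmu E; have [//|/eqP N] := eqVneq mu (jn L 1).
    case/lex_rst: (Lf2 _ Hmu N); rewrite rst_jn E; first by move/lex_irr.
    rewrite jn_max => [[_]]; rewrite ltnS leqn0 => /eqP E0.
    by move: Hmu; rewrite -(jn_rst mu) E E0 Z eqxx.
  have := lead_rs Lf; rewrite rst_jn; apply; first by rewrite Hc.
  exact: rs_nz.
- left; exists (rs false f); split; first exact: van_slice.
  have := lead_rs Lf; rewrite rst_jn; apply; first by rewrite mcoeff_rs0.
  exact: rs_nz.
Qed.

Lemma Slex_memP (R : realType) k (W : {set {ffun 'I_k -> bool}}) tau :
  reflect (~ LL R W (sqfree_mon tau)) (tau \in Slex R W).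
Proof.
rewrite inE; apply: (iffP negP) => H1 H2; apply: H1.
- by apply/boolp.asboolP/key.
- by apply/key/boolp.asboolP.
Qed.

Definition proj m (t : {set 'I_m.+1}) : {set 'I_m} := [set i | lift ord_max i \in t].

Lemma mem_embed m (s : {set 'I_m}) i : (lift ord_max i \in embed s) = (i \in s).
Proof. by rewrite mem_imset //; apply: lift_inj. Qed.

Lemma max_embed m (s : {set 'I_m}) : (ord_max \in embed s) = false.
Proof. by apply/imsetP => [[j _ E]]; move: (neq_lift ord_max j); rewrite -E eqxx. Qed.

Lemma proj_embed m (s : {set 'I_m}) : proj (embed s) = s.
Proof. by apply/setP => i; rewrite inE mem_embed. Qed.

Lemma proj_embed1 m (s : {set 'I_m}) : proj (ord_max |: embed s) = s.
Proof.
by apply/setP => i; rewrite inE in_setU1 mem_embed eq_sym (negbTE (neq_lift _ _)).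
Qed.

Lemma decomp m (t : {set 'I_m.+1}) :
  t = if ord_max \in t then ord_max |: embed (proj t) else embed (proj t).
Proof.
apply/setP => i; case: (unliftP ord_max i) => [j ->|->].
- case: ifP => _; rewrite ?in_setU1 mem_embed inE //.
  by rewrite eq_sym (negbTE (neq_lift _ _)).
- by case: ifP => H; rewrite ?in_setU1 ?eqxx ?max_embed.
Qed.

Lemma mem_embedK m (K : {set {set 'I_m}}) s : (embed s \in embedK K) = (s \in K).
Proof.
apply/imsetP/idP => [[s' Hs' E]|H]; last by exists s.
by rewrite -(proj_embed s) E proj_embed.
Qed.

Lemma mem_embedK1 m (K : {set {set 'I_m}}) s : (ord_max |: embed s \in embedK K) = false.
Proof.
apply/imsetP => [[s' _ E]]; have : ord_max \in ord_max |: embed s by rewrite setU11.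
by rewrite E max_embed.
Qed.

Lemma mem_coneK0 m (K : {set {set 'I_m}}) s : (embed s \in coneK K) = (s \in K).
Proof.
rewrite in_setU mem_embedK; case: (s \in K) => //=.
apply/imsetP => [[s' _ E]]; have : ord_max \in ord_max |: embed s' by rewrite setU11.
by rewrite -E max_embed.
Qed.

Lemma mem_coneK1 m (K : {set {set 'I_m}}) s : (ord_max |: embed s \in coneK K) = (s \in K).
Proof.
rewrite in_setU mem_embedK1 /=.
apply/imsetP/idP => [[s' Hs' E]|H]; last by exists s.
by rewrite -(proj_embed1 s) E proj_embed1.
Qed.

Lemma sqfree_embed m (s : {set 'I_m}) : sqfree_mon (embed s) = jn (sqfree_mon s) 0.
Proof.
apply/mnmP => i; rewrite !mnmE; case: (unliftP ord_max i) => [j ->|->].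
- by rewrite mem_embed mnmE.
- by have := max_embed s; case: (_ \in _).
Qed.

Lemma sqfree_embed1 m (s : {set 'I_m}) :
  sqfree_mon (ord_max |: embed s) = jn (sqfree_mon s) 1.
Proof.
apply/mnmP => i; rewrite !mnmE; case: (unliftP ord_max i) => [j ->|->].
- by rewrite in_setU1 eq_sym (negbTE (neq_lift _ _)) mem_embed mnmE.
- by have := setU11 ord_max (embed s); case: (_ \in _).
Qed.

Theorem lemma3p1 (R : realType) (m : nat) (V : {set {ffun 'I_m.+1 -> bool}}) :
  V != set0 ->
  Slex R V =
    embedK (Slex R (slice V false)) :|: embedK (Slex R (slice V true)) :|:
    coneK (Slex R (slice V false) :&: Slex R (slice V true)).
Proof.
move=> _; apply/setP => t; rewrite (decomp t); set s := proj t.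
case: ifP => _.
- rewrite in_setU [X in _ || X]mem_coneK1 in_setU !mem_embedK1 /= in_setI.
  apply/Slex_memP/andP; rewrite sqfree_embed1.
  + move=> H; split; apply/Slex_memP => H'; apply: H; apply: B_back; by [left|right].
  + by move=> [/Slex_memP H0 /Slex_memP H1] /B_fwd [].
- rewrite in_setU [X in _ || X]mem_coneK0 in_setU !mem_embedK in_setI.
  apply/Slex_memP/idP; rewrite sqfree_embed.
  + move=> H; case: (boolp.pselect (LL R (slice V false) (sqfree_mon s))) => H0.
    * rewrite orbC; apply/orP; right; apply/orP; right; apply/Slex_memP => H1.
      by apply: H; apply: A_back.
    * by apply/orP; left; apply/orP; left; apply/Slex_memP.
  + move=> H /A_fwd [H0 H1]; move: H.
    have -> : (s \in Slex R (slice V false)) = false by apply/negP => /Slex_memP.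
    have -> : (s \in Slex R (slice V true)) = false by apply/negP => /Slex_memP.
    by [].
Qed.
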